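(* Let $N>1$ and $d\ge1$. Consider molecules with atom features $s\in\mathbb{R}^{N\times d}$ and coordinates $\vec r\in\mathbb{R}^{N\times3}$, with node identity features $\tilde s_j=\mathrm{Concatenate}(s_j,j)\in\mathbb{R}^{d+1}$, and local environments $\mathrm{LE}_i=\{(\tilde s_j,\vec r_{ij}): j\in\{1,\dots,N\}\}$. There exists a function $g$ mapping such local environments to $\mathbb{R}^{3\times 3}$ which is $\mathrm{O}(3)$-equivariant, i.e. $g(\{(\tilde s_j,\vec r_{ij}o^T)\}_j)=g(\{(\tilde s_j,\vec r_{ij})\}_j)o^T$ for all $o\in\mathrm{O}(3)$, such that for every molecule and every $i$, the matrix $\vec E_i=g(\mathrm{LE}_i)$, with $k=\mathrm{rank}(\vec E_i)$, has its first $k$ rows forming an orthonormal basis of $\mathrm{span}\{\vec r_{ij}: j=1,\dots,N\}$ and its remaining $3-k$ rows equal to zero.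
   Context: $\vec r_i\in\mathbb{R}^{1\times 3}$ is row $i$ of $\vec r$, $\vec r_{ij}=\vec r_i-\vec r_j$, and $\mathrm{O}(3)=\{Q\in\mathbb{R}^{3\times3}:QQ^T=I\}$. $s_j$ is row $j$ of $s$, and the identity feature of atom $j$ is the number $j$. *)

(* Defs.v *)
From HB Require Import structures.
From mathcomp Require Import all_boot all_order all_algebra.
From mathcomp Require Import boolp classical_sets reals.
Set Implicit Arguments. Unset Strict Implicit. Unset Printing Implicit Defensive.
Import Order.TTheory GRing.Theory Num.Theory.
Local Open Scope ring_scope.
Local Open Scope classical_set_scope.

Definition relpos (R : realType) (N : nat) (r : 'M[R]_(N, 3)) (i j : 'I_N) : 'rV[R]_3 :=
  row i r - row j r.

(* Identity-augmented feature  s~_j = Concatenate(s_j, j), atoms numbered 1..N. *)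
Definition idfeat (R : realType) (N d : nat) (s : 'M[R]_(N, d)) (j : 'I_N) : 'rV[R]_(d + 1) :=
  row_mx (row j s) (const_mx (j.+1)%:R).

Definition LE (R : realType) (N d : nat) (s : 'M[R]_(N, d)) (r : 'M[R]_(N, 3)) (i : 'I_N)
  : set ('rV[R]_(d + 1) * 'rV[R]_3) :=
  [set (idfeat s j, relpos r i j) | j in [set: 'I_N]].

(* Matrix whose rows are r_ij, j = 1..N; its row space is span{r_ij}. *)
Definition relmx (R : realType) (N : nat) (r : 'M[R]_(N, 3)) (i : 'I_N) : 'M[R]_(N, 3) :=
  \matrix_(j < N) relpos r i j.

Definition firstrows (R : realType) (k : nat) (E : 'M[R]_3) : 'M[R]_3 :=
  \matrix_(a < 3) (if (a < k)%N then row a E else 0).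

(* Main.v *)
Require Import Defs.
From HB Require Import structures.
From mathcomp Require Import all_boot all_order all_algebra.
From mathcomp Require Import boolp classical_sets reals.
Import Order.TTheory GRing.Theory Num.Theory.
Local Open Scope ring_scope.
Local Open Scope classical_set_scope.

Set Implicit Arguments.
Section GS.
Variable R : realType.

Definition nrm (w : 'rV[R]_3) := (Num.sqrt ((w *m w^T) 0 0))^-1 *: w.

Definition step (st : nat * 'M[R]_3) (v : 'rV[R]_3) : nat * 'M[R]_3 :=
  let w := v - v *m st.2^T *m st.2 in
  if w == 0 then st
  else (st.1.+1, \matrix_(a < 3) if (a == st.1 :> nat) then nrm w else row a st.2).

Definition GS (vs : seq 'rV[R]_3) := foldl step (0%N, 0) vs.

Lemma dotE m n (A B : 'M[R]_(m,n)) a b :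
  (A *m B^T) a b = (row a A *m (row b B)^T) 0 0.
Proof. by rewrite !mxE; apply: eq_bigr => j _; rewrite !mxE. Qed.

Lemma dotrow n (x : 'rV[R]_n) (E : 'M[R]_(3,n)) b :
  (x *m (row b E)^T) 0 0 = (x *m E^T) 0 b.
Proof. by rewrite !mxE; apply: eq_bigr => j _; rewrite !mxE. Qed.

Lemma dotC n (x y : 'rV[R]_n) : (x *m y^T) 0 0 = (y *m x^T) 0 0.
Proof. by rewrite !mxE; apply: eq_bigr => j _; rewrite !mxE mulrC. Qed.

Lemma pid_mulE m n k (A : 'M[R]_(m,n)) :
  (forall a : 'I_m, (k <= a)%N -> row a A = 0) -> pid_mx k *m A = A.
Proof.
move=> H; apply/matrixP => a c; rewrite !mxE.
rewrite (bigD1 a) //= big1 ?addr0.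
  rewrite mxE eqxx /=; case ak : (a < k)%N; first by rewrite mul1r.
  rewrite mul0r; have := congr1 (fun M : 'M[R]_(1,n) => M 0 c) (H a _).
  by rewrite !mxE => ->; rewrite // leqNgt ak.
move=> b ba; rewrite mxE.
have -> : (a == b :> nat) = false by apply/negbTE; rewrite eq_sym.
by rewrite mul0r.
Qed.

Lemma dotpos (w : 'rV[R]_3) : w != 0 -> 0 < (w *m w^T) 0 0.
Proof.
move=> wn0; rewrite lt_def; apply/andP; split; last first.
  by rewrite mxE sumr_ge0 // => j _; rewrite !mxE -expr2 sqr_ge0.
apply: contra wn0 => /eqP H; apply/eqP/rowP => j.
rewrite mxE in H.
have Hj : w 0 j * w^T j 0 = 0.
  by apply: (psumr_eq0P _ H) => // i _; rewrite !mxE -expr2 sqr_ge0.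
by move: Hj; rewrite !mxE => /eqP; rewrite mulf_eq0 orbb => /eqP.
Qed.

Lemma nrm_dot w : w != 0 -> (nrm w *m (nrm w)^T) 0 0 = 1.
Proof.
move=> wn0; rewrite /nrm linearZ /= -scalemxAl -scalemxAr scalerA mxE -expr2 exprVn.
by rewrite sqr_sqrtr ?ltW ?dotpos // mulVf // gt_eqF // dotpos.
Qed.

Definition Inv N (M : 'M[R]_(N,3)) (st : nat * 'M[R]_3) :=
  [/\ st.2 *m st.2^T = pid_mx st.1, (forall a : 'I_3, (st.1 <= a)%N -> row a st.2 = 0),
      (st.1 <= 3)%N & (st.2 <= M)%MS].

Lemma wE k (E : 'M[R]_3) (v : 'rV[R]_3) : E *m E^T = pid_mx k ->
  (forall a : 'I_3, (k <= a)%N -> row a E = 0) -> (v - v *m E^T *m E) *m E^T = 0.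
Proof.
move=> EEt Ez.
have H1 : E^T *m pid_mx k = E^T by rewrite -tr_pid_mx -trmx_mul pid_mulE.
by rewrite mulmxBl -!mulmxA EEt H1 subrr.
Qed.

Lemma step_inv N (M : 'M[R]_(N,3)) st v : Inv M st -> (v <= M)%MS ->
  Inv M (step st v) /\ (st.2 <= (step st v).2)%MS /\ (v <= (step st v).2)%MS.
Proof.
case: st => k E [/= EEt Ez k3 EM] vM; rewrite /step /=.
set w := v - _.
have w0 : w *m E^T = 0 := wE v EEt Ez.
case: eqP => [w0'|/eqP wn0].
  split; first by split.
  split; first exact: submx_refl.
  have -> : v = v *m E^T *m E by move/eqP: w0'; rewrite subr_eq0 => /eqP.
  exact: submxMl.
have k3' : (k < 3)%N.
  case: (ltngtP k 3) => // [k3gt|k3E]; first by rewrite ltnNge k3 in k3gt.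
  have H : E^T *m E = 1%:M by apply: mulmx1C; rewrite EEt k3E pid_mx_1.
  by rewrite /w -mulmxA H mulmx1 subrr eqxx in wn0.
set u := nrm w.
set E' := \matrix_(a < 3) _.
have rowE' a : row a E' = if (a == k :> nat) then u else row a E by rewrite rowK.
have uE' : (u <= E')%MS.
  have <- : row (Ordinal k3') E' = u by rewrite rowE' eqxx.
  exact: row_sub.
have EE' : (E <= E')%MS.
  apply/row_subP => a; case: (eqVneq (a : nat) k) => ak.
    by rewrite Ez ?sub0mx // ak.
  by rewrite -(_ : row a E' = row a E) ?row_sub // rowE' (negbTE ak).
have wE' : (w <= E')%MS.
  have -> : w = (Num.sqrt ((w *m w^T) 0 0)) *: u.
    by rewrite /u /nrm scalerA divff ?scale1r // gt_eqF // sqrtr_gt0 dotpos.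
  exact: scalemx_sub.
split; last split => //.
  split => /=.
  - apply/matrixP => a b; rewrite dotE !rowE' [pid_mx _ a b]mxE.
    case: (eqVneq (a : nat) k) => ak; case: (eqVneq (b : nat) k) => bk.
    + by rewrite ak bk eqxx ltnSn nrm_dot.
    + rewrite ak eq_sym (negbTE bk) /= /u /nrm -scalemxAl mxE.
      by rewrite dotrow w0 [X in _ * X]mxE mulr0.
    + rewrite bk (negbTE ak) /= dotC /u /nrm -scalemxAl mxE.
      by rewrite dotrow w0 [X in _ * X]mxE mulr0.
    + rewrite -dotE EEt mxE.
      by rewrite ltnS [(a <= k)%N]leq_eqVlt (negbTE ak).
  - move=> a ka; rewrite rowE' (gtn_eqF ka) Ez // ltnW //.
  - exact: k3'.
  - apply/row_subP => a; rewrite rowE'; case: ifP => _.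
      apply: scalemx_sub; rewrite /w addmx_sub // -scaleN1r scalemx_sub //.
      exact: submx_trans (submxMl _ _) EM.
    exact: submx_trans (row_sub a E) EM.
have -> : v = w + v *m E^T *m E by rewrite /w subrK.
by rewrite addmx_sub // (submx_trans (submxMl _ _) EE').
Qed.

Lemma fold_inv N (M : 'M[R]_(N,3)) vs st : Inv M st ->
  (forall v, v \in vs -> (v <= M)%MS) ->
  Inv M (foldl step st vs) /\ (st.2 <= (foldl step st vs).2)%MS /\
  (forall v, v \in vs -> (v <= (foldl step st vs).2)%MS).
Proof.
elim: vs st => [|v vs IH] st stI vsM /=.
  by split => //; split => //; exact: submx_refl.
have [I1 [S1 V1]] := step_inv stI (vsM v (mem_head _ _)).
have [I2 [S2 V2]] := IH _ I1 (fun x hx => vsM x (mem_behead (s:=v :: vs) hx)).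
split => //; split; first exact: submx_trans S1 S2.
move=> x; rewrite inE => /orP [/eqP->|]; first exact: submx_trans V1 S2.
exact: V2.
Qed.

Lemma step_eq (o : 'M[R]_3) st v : o^T *m o = 1%:M ->
  step (st.1, st.2 *m o^T) (v *m o^T) = ((step st v).1, (step st v).2 *m o^T).
Proof.
case: st => k E /= Hoo; rewrite /step /=.
have -> : v *m o^T - v *m o^T *m (E *m o^T)^T *m (E *m o^T)
    = (v - v *m E^T *m E) *m o^T.
  by rewrite trmx_mul trmxK mulmxBl !mulmxA -(mulmxA v (o^T) o) Hoo mulmx1.
set w := v - _.
have wo : (w *m o^T == 0) = (w == 0).
  apply/eqP/eqP => [h|->]; last by rewrite mul0mx.
  by rewrite -[w]mulmx1 -Hoo mulmxA h mul0mx.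
rewrite wo; case: eqP => //= _; congr pair.
have -> : nrm (w *m o^T) = nrm w *m o^T.
  by rewrite /nrm trmx_mul trmxK -mulmxA (mulmxA o^T) Hoo mul1mx scalemxAl.
apply/row_matrixP => a; rewrite row_mul !rowK; case: ifP => _ //.
by rewrite row_mul.
Qed.

Lemma fold_eq (o : 'M[R]_3) vs st : o^T *m o = 1%:M ->
  foldl step (st.1, st.2 *m o^T) (map (mulmx^~ o^T) vs)
  = ((foldl step st vs).1, (foldl step st vs).2 *m o^T).
Proof.
move=> Hoo; elim: vs st => [|v vs IH] st //=.
by rewrite step_eq // IH.
Qed.

Definition pick d N (S : set ('rV[R]_(d + 1) * 'rV[R]_3)) (j : 'I_N) : 'rV[R]_3 :=
  xget 0 (fun v => exists f, S (f, v) /\ f 0 (rshift d ord0) = (j.+1)%:R).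
Arguments pick : clear implicits.

Lemma pickE d N (s : 'M[R]_(N,d)) (x : 'I_N -> 'rV[R]_3) j :
  pick d N [set (idfeat s j', x j') | j' in [set: 'I_N]] j = x j.
Proof.
apply: xget_unique.
  exists (idfeat s j); split; first by exists j.
  by rewrite /idfeat row_mxEr mxE.
move=> y [f [[j' _ [<- <-]] H]].
rewrite /idfeat row_mxEr mxE in H.
by move/eqP: H; rewrite eqr_nat eqSS => /eqP/val_inj ->.
Qed.

End GS.
Arguments pick : clear implicits.
Unset Implicit Arguments.

Theorem proposition6 (R : realType) (N d : nat) (hN : (1 < N)%N) (hd : (1 <= d)%N) :
  exists g : set ('rV[R]_(d + 1) * 'rV[R]_3) -> 'M[R]_3,
    (forall (s : 'M[R]_(N, d)) (r : 'M[R]_(N, 3)) (i : 'I_N) (o : 'M[R]_3),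
        o *m o^T = 1%:M ->
        g [set (idfeat s j, relpos r i j *m o^T) | j in [set: 'I_N]]
        = g (LE s r i) *m o^T) /\
    (forall (s : 'M[R]_(N, d)) (r : 'M[R]_(N, 3)) (i : 'I_N),
        let E := g (LE s r i) in
        let k := \rank E in
        (forall a b : 'I_3, (a < k)%N -> (b < k)%N ->
            (row a E *m (row b E)^T) 0 0 = (a == b)%:R) /\
        (forall a : 'I_3, (k <= a)%N -> row a E = 0) /\
        (firstrows k E == relmx r i)%MS).
Proof.
exists (fun S => (@GS R (map (pick R d N S) (enum 'I_N))).2); split.
  move=> s r i o Hoo; have Hoo' : o^T *m o = 1%:M := mulmx1C Hoo.
  rewrite /LE /= (eq_map (pickE R s (fun j => relpos r i j *m o^T))).
  rewrite (eq_map (pickE R s (relpos r i))).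
  have H := congr1 snd (fold_eq (map (relpos r i) (enum 'I_N)) (0%N, 0) Hoo').
  rewrite /= mul0mx -map_comp in H.
  exact: H.
move=> s r i E k.
rewrite {}/k {}/E /LE /= (eq_map (pickE R s (relpos r i))).
set M := relmx r i.
have init : Inv R M (0%N, 0).
  split => //=; first by rewrite mul0mx pid_mx_0.
    by move=> a _; rewrite row0.
  exact: sub0mx.
have vsM : forall v, v \in map (relpos r i) (enum 'I_N) -> (v <= M)%MS.
  move=> v /mapP [j _ ->].
  have <- : row j M = relpos r i j by rewrite rowK.
  exact: row_sub.
have [[EEt Ez k3 EM] [_ Vs]] := fold_inv _ init vsM.
rewrite /GS.
move: EEt Ez k3 EM Vs.
case: (foldl _ _ _) => k0 E0 /= EEt Ez k3 EM Vs.
have rk : \rank E0 = k0.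
  apply/eqP; rewrite eqn_leq; apply/andP; split.
    have := mxrankM_maxl (pid_mx k0 : 'M[R]_3) E0.
    by rewrite pid_mulE // rank_pid_mx.
  have := mxrankM_maxl E0 E0^T.
  by rewrite EEt rank_pid_mx.
rewrite rk; split.
  by move=> a b ha hb; rewrite -dotE EEt mxE ha andbT.
split; first exact: Ez.
have -> : firstrows k0 E0 = E0.
  apply/row_matrixP => a; rewrite rowK; case: ifP => // /negbT.
  by rewrite -leqNgt => /Ez ->.
apply/andP; split => //.
apply/row_subP => j; rewrite rowK; apply: Vs; apply: map_f.
exact: mem_enum.
Qed.
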